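(* Let $\sum_n x_n$ be an absolutely convergent series in a Banach space $X$, and let $k,j\in\mathbb N$ be such that $x_k=x_{k+1}=\dots=x_{k+2j-2}$. Then $j x_k\in S(E(x_n))$.
   Context: The achievement set of an absolutely convergent series $\sum_n x_n$ is $E(x_n):=\{\sum_{n\in A}x_n:\ A\subset\mathbb N\}$. For a subset $A$ of the additive group $X$, the spectre is $S(A):=\{z\in X:\ \forall_{a\in A}\ (a+z\in A \text{ or } a-z\in A)\}$. *)

(* Defs.v *)
From HB Require Import structures.
From mathcomp Require Import all_boot all_order all_algebra.
From mathcomp Require Import all_classical all_reals all_analysis.
Set Implicit Arguments. Unset Strict Implicit. Unset Printing Implicit Defensive.
Import Order.TTheory GRing.Theory Num.Theory.
Import numFieldNormedType.Exports.
Local Open Scope classical_set_scope.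
Local Open Scope ring_scope.

Definition abs_convergent (R : realType) (X : normedModType R) (x : nat -> X) : Prop :=
  cvgn (series (fun n => `|x n|)).

Definition subsum (R : realType) (X : normedModType R) (x : nat -> X) (A : set nat) : X :=
  limn (series (fun n => if `[< A n >] then x n else 0)).

Definition achievement_set (R : realType) (X : normedModType R) (x : nat -> X) : set X :=
  [set s | exists A : set nat, s = subsum x A].

Definition spectre (X : zmodType) (A : set X) : set X :=
  [set z | forall a, A a -> A (a + z) \/ A (a - z)].

(* Main.v *)
Require Import Defs.
From HB Require Import structures.
From mathcomp Require Import all_boot all_order all_algebra.
From mathcomp Require Import all_classical all_reals all_analysis.
From mathcomp Require Import zify.
Import Order.TTheory GRing.Theory Num.Theory.
Import numFieldNormedType.Exports.
Local Open Scope classical_set_scope.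
Local Open Scope ring_scope.

Local Close Scope classical_set_scope.
Section S.
Variables (R : realType) (X : completeNormedModType R) (x : nat -> X).
Hypothesis hx : abs_convergent x.

Definition fA (A : set nat) := fun n => if `[< A n >] then x n else 0.

Lemma cvgA A : cvgn (series (fA A)).
Proof.
apply: normed_cvg; apply: (series_le_cvg _ _ _ hx).
- by move=> n; exact: normr_ge0.
- by move=> n; exact: normr_ge0.
- move=> n; rewrite /fA; rewrite /=; case: `[< A n >] => //; rewrite normr0; exact: normr_ge0.
Qed.

Lemma single (A B : set nat) n : (forall m, A m <-> (B m \/ m = n)) -> ~ B n ->
  subsum x A = subsum x B + x n.
Proof.
move=> hAB hBn.
rewrite /subsum -/(fA A) -/(fA B).
pose d := fun m => if m == n then x n else 0.
have -> : fA A = fA B \+ d.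
  apply/funext => m; rewrite /fA /d /=.
  case: eqP => [->|ne].
    have -> : `[< A n >] = true by apply/asboolP; apply/hAB; right.
    have -> : `[< B n >] = false by apply/asboolP.
    by rewrite add0r.
  rewrite addr0; congr (if _ then _ else _); apply/asbool_equiv_eq.
  by split => [/hAB [//|//]|h]; apply/hAB; left.
have hs : forall N, series d N = if (n < N)%N then x n else 0.
  elim=> [|N IH]; first by rewrite /series /= big_geq.
  rewrite seriesSr IH /d.
  case: (ltngtP n N) => h.
  - have h1 : (n < N.+1)%N by apply: ltnW.
    have h2 : (N == n) = false by apply/negbTE; rewrite neq_ltn h orbT.
    by rewrite h1 ?h2 addr0.
  - have h1 : (n < N.+1)%N = false by apply/negbTE; rewrite -leqNgt.
    have h2 : (N == n) = false by apply/negbTE; rewrite neq_ltn h.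
    by rewrite h1 ?h2 addr0.
  - by subst N; rewrite ltnSn add0r.
have hd : (series d @ \oo --> x n)%classic.
  apply: cvg_near_cst; near=> N.
  rewrite hs ifT //; near: N; by exists n.+1.
rewrite seriesD limD; first by rewrite (cvg_lim _ hd).
- exact: cvgA.
- by apply/cvg_ex; exists (x n).
Unshelve. all: by end_near. Qed.

Variables (k L : nat).
Hypothesis heq : forall i : 'I_L, x (k + i)%N = x k.

Lemma kinj (i i0 : 'I_L) : (k + i)%N = (k + i0)%N -> i = i0.
Proof. by move/addnI => h; apply: val_inj. Qed.

Lemma remove c : forall A, (c <= #|[set i : 'I_L | `[< A (k + i)%N >]]|)%N ->
  exists B, subsum x B = subsum x A - x k *+ c.
Proof.
elim: c => [|c IH] A hc; first by exists A; rewrite subr0.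
have : (0 < #|[set i : 'I_L | `[< A (k + i)%N >]]|)%N by apply: leq_ltn_trans hc.
case/card_gt0P => i0; rewrite inE => /asboolP Ai0.
pose B0 := fun m => A m /\ m <> (k + i0)%N.
have hs : subsum x A = subsum x B0 + x k.
  rewrite -(heq i0); apply: single => [m|[]//].
  split => [Am|[[]//|->//]].
  by case: (eqVneq m (k + i0)%N) => [->|/eqP ne]; [right|left].
have hcard : [set i : 'I_L | `[< B0 (k + i)%N >]] =
    ([set i : 'I_L | `[< A (k + i)%N >]] :\ i0).
  apply/setP => i; rewrite !inE.
  case: (eqVneq i i0) => [->|ne] /=.
    by apply/asboolP => -[].
  apply/asbool_equiv_eq; split => [[]//|h]; split => // /kinj e.
  by move: ne; rewrite e eqxx.
have : (c <= #|[set i : 'I_L | `[< B0 (k + i)%N >]]|)%N.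
  move: hc; rewrite hcard (cardsD1 i0) inE.
  by have -> : `[< A (k + i0)%N >] = true by apply/asboolP.
case/IH => B hB; exists B; rewrite hB hs mulrS; by rewrite opprD addrA addrK.
Qed.

Lemma add c : forall A, (c <= #|[set i : 'I_L | ~~ `[< A (k + i)%N >]]|)%N ->
  exists B, subsum x B = subsum x A + x k *+ c.
Proof.
elim: c => [|c IH] A hc; first by exists A; rewrite addr0.
have : (0 < #|[set i : 'I_L | ~~ `[< A (k + i)%N >]]|)%N by apply: leq_ltn_trans hc.
case/card_gt0P => i0; rewrite inE => /asboolPn Ai0.
pose B0 := fun m => A m \/ m = (k + i0)%N.
have hs : subsum x B0 = subsum x A + x k.
  by rewrite -(heq i0); apply: single.
have hcard : [set i : 'I_L | ~~ `[< B0 (k + i)%N >]] =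
    ([set i : 'I_L | ~~ `[< A (k + i)%N >]] :\ i0).
  apply/setP => i; rewrite !inE.
  case: (eqVneq i i0) => [->|ne] /=.
    by apply/negbF/asboolP; right.
  congr (~~ _); apply/asbool_equiv_eq; split => [[]// /kinj e|h]; last by left.
  by move: ne; rewrite e eqxx.
have : (c <= #|[set i : 'I_L | ~~ `[< B0 (k + i)%N >]]|)%N.
  move: hc; rewrite hcard (cardsD1 i0) inE.
  by have -> : `[< A (k + i0)%N >] = false by apply/asboolPn.
case/IH => B hB; exists B; rewrite hB hs mulrS; by rewrite addrA.
Qed.
End S.


Lemma cnt_split k j (A : nat -> Prop) :
  (#|[set i : 'I_(2 * j - 1) | `[< A (k + i)%N >]]| +
   #|[set i : 'I_(2 * j - 1) | ~~ `[< A (k + i)%N >]]| = 2 * j - 1)%N.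
Proof.
have -> : [set i : 'I_(2 * j - 1) | ~~ `[< A (k + i)%N >]] =
    ~: [set i : 'I_(2 * j - 1) | `[< A (k + i)%N >]].
  by apply/setP => i; rewrite !inE.
by rewrite cardsC card_ord.
Qed.

Lemma both (R : realType) (X : completeNormedModType R) (x : nat -> X) :
  abs_convergent x -> forall k j (A : nat -> Prop), (0 < j)%N ->
  (forall i : 'I_(2 * j - 1), x (k + i)%N = x k) ->
  (exists B, subsum x B = subsum x A + x k *+ j) \/
  (exists B, subsum x B = subsum x A - x k *+ j).
Proof.
move=> hx k j A hj heq'.
have hC := cnt_split k j A.
case: (leqP j #|[set i : 'I_(2 * j - 1) | `[< A (k + i)%N >]]|) => h.
- by right; exact: (@remove _ _ _ hx _ _ heq' _ _ h).
- have h2 : (j <= #|[set i : 'I_(2 * j - 1) | ~~ `[< A (k + i)%N >]]|)%N by lia.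
  by left; exact: (@add _ _ _ hx _ _ heq' _ _ h2).
Qed.

Local Open Scope classical_set_scope.

Theorem mainTheorem12 (R : realType) (X : completeNormedModType R)
  (x : nat -> X) (k j : nat) :
  abs_convergent x ->
  (0 < j)%N ->
  (forall i : nat, (i <= 2 * j - 2)%N -> x (k + i)%N = x k) ->
  spectre (achievement_set x) (x k *+ j).
Proof.
move=> hx hj heq a [A ->].
have heq' : forall i : 'I_(2 * j - 1), x (k + i)%N = x k.
  move=> i; apply: heq; have := ltn_ord i; lia.
case: (@both _ _ _ hx k j A hj heq') => -[B hB]; [left|right]; exists B; by rewrite hB.
Qed.
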